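(* Let $\{p_\sigma\}$ and $\{p'_\sigma\}$ be two systems of probability parameters indexed by the non-empty proper subsets $\sigma\subsetneq[n]$ with $p_\sigma\le p'_\sigma$ for every simplex $\sigma$, and let $\underline{\mathbb P}_n,\underline{\mathbb P}'_n$ (resp. $\overline{\mathbb P}_n,\overline{\mathbb P}'_n$) be the associated lower (resp. upper) measures. Then for any integer $d\ge0$, $$\underline{\mathbb P}_n(\dim Y\ge d)\le\underline{\mathbb P}'_n(\dim Y\ge d)\quad\text{and}\quad\overline{\mathbb P}_n(\dim Y\ge d)\le\overline{\mathbb P}'_n(\dim Y\ge d).$$
   Context: $[n]=\{0,\dots,n\}$. Given parameters $p_\sigma\in[0,1]$ for non-empty proper subsets $\sigma\subsetneq[n]$, let $X$ be the random hypergraph containing each such $\sigma$ independently with probability $p_\sigma$. The lower measure is the law of the largest simplicial complex contained in $X$; the upper measure is the law of the smallest simplicial complex containing $X$. *)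

(* Defs.v *)
(* Vertex set [n] = {0,...,n} is 'I_n.+1. *)
From HB Require Import structures.
From mathcomp Require Import all_boot all_order all_algebra.
Set Implicit Arguments. Unset Strict Implicit. Unset Printing Implicit Defensive.
Import Order.TTheory GRing.Theory Num.Theory.
Local Open Scope ring_scope.

Section RandomComplex.
Variable n : nat.
Notation V := 'I_n.+1.

Definition simplices : {set {set V}} :=
  [set s : {set V} | (s != set0) && (s != setT)].

(* Lower complex: largest simplicial complex contained in X. *)
Definition lower_cx (X : {set {set V}}) : {set {set V}} :=
  [set s in X | [forall t : {set V}, ((t != set0) && (t \subset s)) ==> (t \in X)]].

(* Upper complex: smallest simplicial complex containing X. *)
Definition upper_cx (X : {set {set V}}) : {set {set V}} :=
  [set t : {set V} | (t != set0) && [exists s in X, t \subset s]].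

(* dim Y >= d  iff  Y has a face with at least d+1 vertices. *)
Definition dim_ge (Y : {set {set V}}) (d : nat) : bool :=
  [exists s in Y, (d.+1 <= #|s|)%N].

Variable R : realFieldType.

Definition hyper_prob (p : {set V} -> R) (X : {set {set V}}) : R :=
  \prod_(s in simplices) (if s \in X then p s else 1 - p s).

Definition lower_measure (p : {set V} -> R) (E : pred {set {set V}}) : R :=
  \sum_(X : {set {set V}} | (X \subset simplices) && E (lower_cx X)) hyper_prob p X.

Definition upper_measure (p : {set V} -> R) (E : pred {set {set V}}) : R :=
  \sum_(X : {set {set V}} | (X \subset simplices) && E (upper_cx X)) hyper_prob p X.

End RandomComplex.

(* Main.v *)
Require Import Defs.
From HB Require Import structures.
From mathcomp Require Import all_boot all_order all_algebra.
Import Order.TTheory GRing.Theory Num.Theory.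
Local Open Scope ring_scope.
Set Implicit Arguments. Unset Strict Implicit.

Lemma sum_pair (T : finType) (R : realFieldType) (s0 : T) (f : {set T} -> R) :
  \sum_(X : {set T}) f X = \sum_(X : {set T} | s0 \notin X) (f X + f (s0 |: X)).
Proof.
rewrite (bigID (fun X : {set T} => s0 \in X)) /= addrC big_split /=; congr (_ + _).
rewrite (reindex_onto (fun Y : {set T} => s0 |: Y) (fun X : {set T} => X :\ s0)) /=; last first.
  by move=> X; apply: setD1K.
apply: eq_bigl => Y; rewrite setU11 /=.
case: (boolP (s0 \in Y)) => h.
  apply/negbTE/eqP => e; move: h; rewrite -e; by rewrite setD11.
by rewrite setU1K // eqxx.
Qed.

Definition Pm (T : finType) (R : realFieldType) (S : {set T}) (q : T -> R)
  (E : pred {set T}) : R :=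
  \sum_(X : {set T} | (X \subset S) && E X)
     \prod_(s in S) (if s \in X then q s else 1 - q s).

Lemma step (T : finType) (R : realFieldType) (S : {set T}) (q q' : T -> R)
  (E : pred {set T}) (s0 : T) :
  (forall X Y : {set T}, X \subset Y -> E X -> E Y) ->
  s0 \in S -> (forall s, s != s0 -> q s = q' s) -> q s0 <= q' s0 ->
  (forall s, s \in S -> 0 <= q s <= 1) ->
  Pm S q E <= Pm S q' E.
Proof.
move=> Emon s0S qq' qs0 qb.
rewrite /Pm big_mkcond /=.
rewrite [X in _ <= X]big_mkcond /=.
rewrite (sum_pair s0) [X in _ <= X](sum_pair s0).
apply: ler_sum => Y s0Y.
rewrite !(bigD1 s0 s0S) /= setU11 (negbTE s0Y).
set w := \prod_(i in S | i != s0) (if i \in Y then q i else 1 - q i).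
have w1 : \prod_(i in S | i != s0) (if i \in s0 |: Y then q i else 1 - q i) = w.
  by apply: eq_bigr => i /andP[_ ne]; rewrite in_setU1 (negbTE ne).
have w2 : \prod_(i in S | i != s0) (if i \in Y then q' i else 1 - q' i) = w.
  by apply: eq_bigr => i /andP[_ ne]; rewrite qq'.
have w3 : \prod_(i in S | i != s0) (if i \in s0 |: Y then q' i else 1 - q' i) = w.
  by rewrite -w1; apply: eq_bigr => i /andP[_ ne]; rewrite qq'.
rewrite w1 w2 w3.
have w0 : 0 <= w.
  apply: prodr_ge0 => i /andP[iS _]; have /andP[a b] := qb i iS.
  by case: (i \in Y); rewrite ?subr_ge0.
have c01 : (Y \subset S) && E Y -> (s0 |: Y \subset S) && E (s0 |: Y).
  case/andP=> YS EY; rewrite subUset sub1set s0S YS /=.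
  by apply: (Emon Y) => //; apply: subsetUr.
case: ((Y \subset S) && E Y) c01 => [->//|_].
  by rewrite -!mulrDl !subrK.
case: (_ && _); last by [].
rewrite !add0r.
by rewrite ler_wpM2r.
Qed.

Lemma mono (T : finType) (R : realFieldType) (S : {set T}) (p p' : T -> R)
  (E : pred {set T}) :
  (forall X Y : {set T}, X \subset Y -> E X -> E Y) ->
  (forall s, s \in S -> 0 <= p s <= 1) ->
  (forall s, s \in S -> 0 <= p' s <= 1) ->
  (forall s, s \in S -> p s <= p' s) ->
  Pm S p E <= Pm S p' E.
Proof.
move=> Emon hp hp' hle.
have H : forall l : seq T, all (mem S) l ->
    Pm S p E <= Pm S (fun s => if s \in l then p' s else p s) E.
  elim=> [|x l IH] /=; first by [].
  case/andP=> xS lS; apply: le_trans (IH lS) _.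
  apply: (step Emon xS).
  - by move=> s ne; rewrite in_cons (negbTE ne).
  - by rewrite in_cons eqxx /=; case: (x \in l) => //; exact: hle.
  - by move=> s sS; case: (s \in l); [exact: hp'|exact: hp].
have := H (enum S).
move=> H'; apply: le_trans (H' _) _.
  by apply/allP => x; rewrite mem_enum.
rewrite le_eqVlt; apply/orP; left; apply/eqP.
apply: eq_bigr => X _; apply: eq_bigr => s sS; by rewrite mem_enum sS.
Qed.

Theorem corollary4p3 (R : realFieldType) (n : nat)
    (p p' : {set 'I_n.+1} -> R)
    (hp : forall s, s \in simplices n -> 0 <= p s <= 1)
    (hp' : forall s, s \in simplices n -> 0 <= p' s <= 1)
    (hle : forall s, s \in simplices n -> p s <= p' s)
    (d : nat) :
  lower_measure p (fun Y => dim_ge Y d) <= lower_measure p' (fun Y => dim_ge Y d) /\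
  upper_measure p (fun Y => dim_ge Y d) <= upper_measure p' (fun Y => dim_ge Y d).
Proof.
have dmon : forall Y Z : {set {set 'I_n.+1}}, Y \subset Z -> dim_ge Y d -> dim_ge Z d.
  move=> Y Z YZ /existsP[s /andP[sY ds]]; apply/existsP; exists s.
  by rewrite ds (subsetP YZ) .
split.
- apply: (@mono _ _ (simplices n) p p' (fun X => dim_ge (lower_cx X) d)) => //.
  move=> X Y XY; apply: dmon; apply/subsetP => s; rewrite !inE.
  case/andP=> sX /forallP H; rewrite (subsetP XY) //=; apply/forallP => t.
  by apply/implyP => /(implyP (H t)); apply: (subsetP XY).
- apply: (@mono _ _ (simplices n) p p' (fun X => dim_ge (upper_cx X) d)) => //.
  move=> X Y XY; apply: dmon; apply/subsetP => s; rewrite !inE.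
  case/andP=> ->  /existsP[t /andP[tX st]] /=; apply/existsP; exists t.
  by rewrite st (subsetP XY).
Qed.
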